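(* Let $U=U_1\times\cdots\times U_m\subset\mathbb{R}^m_+$ be a convex set with each $U_i\subseteq\mathbb{R}$, let $C\subseteq\mathbb{R}^m$ be a set, and let $\overline{U}=U\cap C$. Let $c\in\mathbb{R}^{n_1}$, $d\in\mathbb{R}^{n_2}$, and $a_i\in\mathbb{R}^{n_1}$, $g_i\in\mathbb{R}^{n_2}$ for $i\in[m]$. Define $$z_{\rm ro}=\inf_{x\in\mathbb{R}^{n_1},\,y\in\mathbb{R}^{n_2}}\{c^Tx+d^Ty:\ a_i^Tx+g_i^Ty\ge u_i\ \ \forall u\in U,\ \forall i\in[m]\},$$ $$z_{\rm cp}=\inf_{x\in\mathbb{R}^{n_1},\,y\in\mathbb{R}^{n_2}}\{c^Tx+d^Ty:\ a_i^Tx+g_i^Ty\ge u_i\ \ \forall u\in \overline{U},\ \forall i\in[m]\}.$$ Let $\rho_{\rm ro}=\rho\big(U^\downarrow,\Pi(\overline{U}^\downarrow)\big)$ and $\gamma_{\rm ro}=\gamma\big(U^\downarrow,\Pi(\overline{U}^\downarrow)\big)$. If $0<z_{\rm cp}\le z_{\rm ro}<\infty$, then $$\rho_{\rm ro}\le \frac{z_{\rm cp}}{z_{\rm ro}}\le \gamma_{\rm ro}.$$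
   Context: $[m]=\{1,\dots,m\}$. For $S\subseteq\mathbb{R}^m_+$, the down-hull is $S^\downarrow=\{t\in\mathbb{R}^m_+:\exists s\in S,\ t\le s\text{ componentwise}\}$. For $S\subseteq\mathbb{R}^m$, $\Pi_i(S)=\{u_i:\exists u\in S\text{ whose $i$-th coordinate is }u_i\}$ and $\Pi(S)=\Pi_1(S)\times\cdots\times\Pi_m(S)$. For a set $S$ and $r\ge0$, $rS=\{rx:x\in S\}$. For sets $S_1,S_2$: $\rho(S_1,S_2)=\max\{\rho\ge 0:\rho S_1\subseteq S_2\}$ and $\gamma(S_1,S_2)=\min\{\gamma\ge0: S_2\subseteq \gamma S_1\}$. *)

(* Defs.v *)
From HB Require Import structures.
From mathcomp Require Import all_boot all_order all_algebra.
From mathcomp Require Import all_classical all_reals all_analysis.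
Set Implicit Arguments. Unset Strict Implicit. Unset Printing Implicit Defensive.
Import Order.TTheory GRing.Theory Num.Theory.
Local Open Scope classical_set_scope.
Local Open Scope ring_scope.

Section Defs.
Variable R : realType.

Definition dotv (k : nat) (a x : 'rV[R]_k) : R := \sum_(i < k) a 0 i * x 0 i.

Definition orthant (m : nat) : set 'rV[R]_m := [set u | forall i, 0 <= u 0 i].

Definition downhull (m : nat) (S : set 'rV[R]_m) : set 'rV[R]_m :=
  [set t | orthant t /\ exists2 s, S s & forall i, t 0 i <= s 0 i].

Definition proj_i (m : nat) (S : set 'rV[R]_m) (i : 'I_m) : set R :=
  [set r | exists2 u, S u & u 0 i = r].

Definition Pi (m : nat) (S : set 'rV[R]_m) : set 'rV[R]_m :=
  [set u | forall i, proj_i S i (u 0 i)].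

Definition scaleset (m : nat) (r : R) (S : set 'rV[R]_m) : set 'rV[R]_m :=
  [set r *: x | x in S].

(* rho(S1,S2) = max{rho >= 0 : rho S1 ⊆ S2}, taken as a supremum in \bar R *)
Definition rho_of (m : nat) (S1 S2 : set 'rV[R]_m) : \bar R :=
  ereal_sup [set r%:E | r in [set r : R | 0 <= r /\ scaleset r S1 `<=` S2]].

(* gamma(S1,S2) = min{gamma >= 0 : S2 ⊆ gamma S1}, taken as an infimum in \bar R *)
Definition gamma_of (m : nat) (S1 S2 : set 'rV[R]_m) : \bar R :=
  ereal_inf [set g%:E | g in [set g : R | 0 <= g /\ S2 `<=` scaleset g S1]].

Definition robust_value (m n1 n2 : nat) (c : 'rV[R]_n1) (d : 'rV[R]_n2)
    (a : 'I_m -> 'rV[R]_n1) (g : 'I_m -> 'rV[R]_n2) (V : set 'rV[R]_m) : \bar R :=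
  ereal_inf [set (dotv c xy.1 + dotv d xy.2)%:E | xy in
    [set xy : 'rV[R]_n1 * 'rV[R]_n2 |
       forall u, V u -> forall i, u 0 i <= dotv (a i) xy.1 + dotv (g i) xy.2]].

End Defs.

(* Main.v *)
Require Import Defs.
From HB Require Import structures.
From mathcomp Require Import all_boot all_order all_algebra.
From mathcomp Require Import all_classical all_reals all_analysis.
Import Order.TTheory GRing.Theory Num.Theory.
Local Open Scope classical_set_scope.
Local Open Scope ring_scope.

Lemma dotvZ (R : realType) (k : nat) (a x : 'rV[R]_k) (r : R) :
  dotv a (r *: x) = r * dotv a x.
Proof.
rewrite /dotv mulr_sumr; apply: eq_bigr => i _; rewrite mxE.
by rewrite mulrA (mulrC (a 0 i)) -mulrA.
Qed.

Theorem theorem1 (R : realType) (m n1 n2 : nat)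
  (U : set 'rV[R]_m) (Ui : 'I_m -> set R) (C : set 'rV[R]_m)
  (c : 'rV[R]_n1) (d : 'rV[R]_n2)
  (a : 'I_m -> 'rV[R]_n1) (g : 'I_m -> 'rV[R]_n2) :
  U = [set u | forall i, Ui i (u 0 i)] ->
  U `<=` @orthant R m ->
  convex_set (U : set (convex_lmodType 'rV[R]_m)) ->
  let Ubar := U `&` C in
  let z_ro := robust_value c d a g U in
  let z_cp := robust_value c d a g Ubar in
  (0 < z_cp)%E -> (z_cp <= z_ro)%E -> (z_ro < +oo)%E ->
  (rho_of (downhull U) (Pi (downhull Ubar)) <= (fine z_cp / fine z_ro)%:E)%E /\
  ((fine z_cp / fine z_ro)%:E <= gamma_of (downhull U) (Pi (downhull Ubar)))%E.
Proof.
move=> _ Uor _ Ubar z_ro z_cp cp0 cpro ro_oo.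
have [zc Ezc] : exists zc, z_cp = zc%:E.
  move: cp0 cpro ro_oo; case: z_cp => [x| |] //=; first by exists x.
  by case: z_ro.
have [zr Ezr] : exists zr, z_ro = zr%:E.
  move: cp0 cpro ro_oo; rewrite Ezc; case: z_ro => [x| |] //=; by exists x.
rewrite Ezc Ezr /=.
have zc0 : 0 < zc by rewrite -lte_fin -Ezc.
have zr0 : 0 < zr by apply: (lt_le_trans zc0); rewrite -lee_fin -Ezc -Ezr.
split.
- apply: ge_ereal_sup => _ [r [r0 Hr] <-]; rewrite lee_fin ler_pdivlMr //.
  have : ((r * zr)%:E <= z_cp)%E.
    apply: le_ereal_inf_tmp => _ [xy Hxy <-].
    have [->|rpos] := eqVneq r 0.
      rewrite mul0r lee_fin.
      have : (z_cp <= (dotv c xy.1 + dotv d xy.2)%:E)%E.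
        by apply: ereal_inf_lbound; exists xy.
      by rewrite Ezc lee_fin => /(le_trans (ltW zc0)).
    have rp : 0 < r by rewrite lt_def rpos r0.
    have : (z_ro <= (dotv c (r^-1 *: xy.1) + dotv d (r^-1 *: xy.2))%:E)%E.
      apply: ereal_inf_lbound; exists (r^-1 *: xy.1, r^-1 *: xy.2) => //=.
      move=> u Uu i; rewrite !dotvZ -mulrDr.
      have Uu' : downhull U u by split; [exact: Uor|exists u].
      have [s [sor [t [Ut Ct] ts]] si] := Hr _ (ex_intro2 _ _ _ Uu' erefl) i.
      rewrite mxE in si; rewrite ler_pdivlMl // -si.
      exact: le_trans (ts i) (Hxy _ (conj Ut Ct) i).
    rewrite Ezr !dotvZ -mulrDr !lee_fin => H.
    by rewrite -ler_pdivlMl.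
  by rewrite Ezc lee_fin.
- apply: le_ereal_inf_tmp => _ [r [r0 Hr] <-]; rewrite lee_fin ler_pdivrMr //.
  suff : (z_cp <= (r * zr)%:E)%E by rewrite Ezc lee_fin mulrC.
  have key : forall xy : 'rV[R]_n1 * 'rV[R]_n2,
      (forall u, U u -> forall i, u 0 i <= dotv (a i) xy.1 + dotv (g i) xy.2) ->
      (z_cp <= (r * (dotv c xy.1 + dotv d xy.2))%:E)%E.
    move=> xy Hxy.
    rewrite mulrDr -!dotvZ.
    apply: ereal_inf_lbound; exists (r *: xy.1, r *: xy.2) => //=.
    move=> s [Us Cs] i; rewrite !dotvZ -mulrDr.
    have Ps : Pi (downhull Ubar) s.
      move=> j; exists s => //; split; [exact: Uor|exists s => //].
    have [w [wor [u Uu wu]] ws] := Hr _ Ps.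
    rewrite -ws mxE; apply: ler_wpM2l => //.
    exact: le_trans (wu i) (Hxy _ Uu i).
  have [rz|rpos] := eqVneq r 0.
    rewrite rz in key *.
    have [xy Hxy] : exists xy : 'rV[R]_n1 * 'rV[R]_n2,
        (forall u, U u -> forall i, u 0 i <= dotv (a i) xy.1 + dotv (g i) xy.2).
      apply: contrapT => Hne.
      have : z_ro = +oo%E.
        rewrite /z_ro /robust_value.
        suff -> : [set xy : 'rV[R]_n1 * 'rV[R]_n2 | forall u, U u ->
           forall i, u 0 i <= dotv (a i) xy.1 + dotv (g i) xy.2] = set0.
          by rewrite image_set0 ereal_inf0.
        by apply/seteqP; split => // xy Hxy; apply: Hne; exists xy.
      by rewrite Ezr.
    by move: (key xy Hxy); rewrite !mul0r.
  have rp : 0 < r by rewrite lt_def rpos r0.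
  rewrite Ezc lee_fin -ler_pdivrMl //.
  rewrite -lee_fin -Ezr; apply: le_ereal_inf_tmp => _ [xy Hxy <-].
  have := key xy Hxy; rewrite Ezc !lee_fin => H.
  by rewrite ler_pdivrMl.
Qed.
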